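(* Let $\mathcal J$ be a generalized almost complex structure and $D$ a torsion-free generalized connection on a Courant algebroid $E$. For $u\in E$ let $A_u$ be the endomorphism $v\mapsto(D_v\mathcal J)u$ of $E$ and $A_u^{\mathrm{sym}}$ its $\langle\cdot,\cdot\rangle$-symmetric part. Define $$\tilde D_uv=D_uv-\tfrac14\{A_u^{\mathrm{sym}},\mathcal J\}v-\tfrac12\mathcal J(D_u\mathcal J)v,$$ where $\{X,Y\}=XY+YX$. Then $\tilde D$ is a generalized connection with $\tilde D\mathcal J=0$, and its torsion satisfies $T^{\tilde D}(u,v,w)=\frac14N_{\mathcal J}(u,v,w)$ for all $u,v,w$. In particular, if $\mathcal J$ is integrable, then $\tilde D$ is torsion-free (and preserves $\mathcal J$).
   Context: A Courant algebroid on $M$ is a real vector bundle $E\to M$ with nondegenerate symmetric bilinear form $\langle\cdot,\cdot\rangle$, an $\mathbb R$-bilinear bracket $[\cdot,\cdot]$ on $\Gamma(E)$ and bundle map $\pi:E\to TM$ such that for $u,v,w\in\Gamma(E)$, $f\in C^\infty(M)$: $[u,[v,w]]=[[u,v],w]+[v,[u,w]]$; $\pi([u,v])=[\pi(u),\pi(v)]$; $[u,fv]=\pi(u)(f)v+f[u,v]$; $\pi(u)\langle v,w\rangle=\langle[u,v],w\rangle+\langle v,[u,w]\rangle$; $2\langle[u,u],v\rangle=\pi(v)\langle u,u\rangle$. A generalized connection is an $\mathbb R$-linear $D:\Gamma(E)\to\Gamma(E^*\otimes E)$ with $D_u(fv)=\pi(u)(f)v+fD_uv$ and $\pi(u)\langle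 v,w\rangle=\langle D_uv,w\rangle+\langle v,D_uw\rangle$; its torsion is $T^D(u,v)=D_uv-D_vu-[u,v]+(Du)^*v$ ($(Du)^*$ adjoint of $w\mapsto D_wu$), $T^D(u,v,w)=\langle T^D(u,v),w\rangle$. A generalized almost complex structure is a $\langle\cdot,\cdot\rangle$-orthogonal $\mathcal J$ with $\mathcal J^2=-\mathrm{Id}$; $N_{\mathcal J}(u,v)=[\mathcal Ju,\mathcal Jv]-[u,v]-\mathcal J([\mathcal Ju,v]+[u,\mathcal Jv])$, $N_{\mathcal J}(u,v,w)=\langle N_{\mathcal J}(u,v),w\rangle$; $\mathcal J$ is integrable if $N_{\mathcal J}=0$. *)

(* Defs.v *)
(* Algebraic (Serre–Swan style) model of a Courant algebroid:
   A  = the algebra C^oo(M) (any commutative algebra over a real field R),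
   S  = the A-module Gamma(E) of sections. *)
From HB Require Import structures.
From mathcomp Require Import all_boot all_order all_algebra.
From Stdlib Require Import ClassicalEpsilon.
Set Implicit Arguments. Unset Strict Implicit. Unset Printing Implicit Defensive.
Import Order.TTheory GRing.Theory Num.Theory.
Local Open Scope ring_scope.

Section Courant.
Variables (R : realFieldType) (A : comAlgType R) (S : lmodType A).

(* R-linear derivations of A (= vector fields acting on functions) *)
Definition is_derivation (d : A -> A) : Prop :=
  [/\ (forall f g, d (f + g) = d f + d g),
      (forall (r : R) f, d (r *: f) = r *: d f) &
      (forall f g, d (f * g) = d f * g + f * d g)].

Record courant_algebroid := CourantAlgebroid {
  ca_ip : S -> S -> A;
  ca_br : S -> S -> S;
  ca_anchor : S -> A -> A;
  (* <.,.> symmetric, A-bilinear, nondegenerate (fibrewise nondegenerate on a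
     finite-rank bundle: every tensorial functional is represented) *)
  ca_ip_sym : forall u v, ca_ip u v = ca_ip v u;
  ca_ip_addl : forall u v w, ca_ip (u + v) w = ca_ip u w + ca_ip v w;
  ca_ip_scalel : forall (f : A) u v, ca_ip (f *: u) v = f * ca_ip u v;
  ca_ip_nondeg : forall phi : S -> A,
      (forall x y, phi (x + y) = phi x + phi y) ->
      (forall (f : A) x, phi (f *: x) = f * phi x) ->
      exists s, forall x, phi x = ca_ip s x;
  ca_ip_nondeg0 : forall s, (forall x, ca_ip s x = 0) -> s = 0;
  ca_anchor_deriv : forall u, is_derivation (ca_anchor u);
  ca_anchor_add : forall u v f, ca_anchor (u + v) f = ca_anchor u f + ca_anchor v f;
  ca_anchor_scale : forall (g : A) u f, ca_anchor (g *: u) f = g * ca_anchor u f;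
  ca_br_addl : forall u v w, ca_br (u + v) w = ca_br u w + ca_br v w;
  ca_br_addr : forall u v w, ca_br u (v + w) = ca_br u v + ca_br u w;
  ca_br_scalel : forall (r : R) u v, ca_br ((r%:A : A) *: u) v = (r%:A : A) *: ca_br u v;
  ca_br_scaler : forall (r : R) u v, ca_br u ((r%:A : A) *: v) = (r%:A : A) *: ca_br u v;
  ca_jacobi : forall u v w,
      ca_br u (ca_br v w) = ca_br (ca_br u v) w + ca_br v (ca_br u w);
  ca_anchor_br : forall u v f,
      ca_anchor (ca_br u v) f = ca_anchor u (ca_anchor v f) - ca_anchor v (ca_anchor u f);
  ca_leibniz : forall u v (f : A),
      ca_br u (f *: v) = ca_anchor u f *: v + f *: ca_br u v;
  ca_invariance : forall u v w,
      ca_anchor u (ca_ip v w) = ca_ip (ca_br u v) w + ca_ip v (ca_br u w);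
  ca_sym_part : forall u v,
      (2%:R : A) * ca_ip (ca_br u u) v = ca_anchor v (ca_ip u u)
}.

Variable E : courant_algebroid.
Local Notation ip := (ca_ip E).
Local Notation br := (ca_br E).
Local Notation pi := (ca_anchor E).

(* adjoint of an endomorphism w.r.t. <.,.>: <adjoint F w, x> = <w, F x>.
   (It exists and is unique for A-linear F, by nondegeneracy.) *)
Definition adjoint (F : S -> S) (w : S) : S :=
  epsilon (inhabits 0) (fun s => forall x, ip s x = ip w (F x)).

Definition gen_connection (D : S -> S -> S) : Prop :=
  [/\ (forall u1 u2 v, D (u1 + u2) v = D u1 v + D u2 v),
      (forall (f : A) u v, D (f *: u) v = f *: D u v),
      (forall u v1 v2, D u (v1 + v2) = D u v1 + D u v2),
      (forall u (f : A) v, D u (f *: v) = pi u f *: v + f *: D u v) &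
      (forall u v w, pi u (ip v w) = ip (D u v) w + ip v (D u w))].

Definition torsion (D : S -> S -> S) (u v : S) : S :=
  D u v - D v u - br u v + adjoint (fun w => D w u) v.

Definition torsion3 (D : S -> S -> S) (u v w : S) : A := ip (torsion D u v) w.

Definition torsion_free (D : S -> S -> S) : Prop := forall u v, torsion D u v = 0.

Definition gen_almost_complex (J : S -> S) : Prop :=
  [/\ (forall u v, J (u + v) = J u + J v),
      (forall (f : A) u, J (f *: u) = f *: J u),
      (forall u v, ip (J u) (J v) = ip u v) &
      (forall u, J (J u) = - u)].

Definition nijenhuis (J : S -> S) (u v : S) : S :=
  br (J u) (J v) - br u v - J (br (J u) v + br u (J v)).

Definition nijenhuis3 (J : S -> S) (u v w : S) : A := ip (nijenhuis J u v) w.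

Definition integrable (J : S -> S) : Prop := forall u v, nijenhuis J u v = 0.

Definition covJ (D : S -> S -> S) (J : S -> S) (u v : S) : S :=
  D u (J v) - J (D u v).

Definition endA (D : S -> S -> S) (J : S -> S) (u : S) : S -> S :=
  fun v => covJ D J v u.

Definition sym_part (F : S -> S) : S -> S :=
  fun v => ((2%:R)^-1 : R)%:A *: (F v + adjoint F v).

Definition tildeD (D : S -> S -> S) (J : S -> S) (u v : S) : S :=
  D u v
  - ((4%:R)^-1 : R)%:A *: (sym_part (endA D J u) (J v) + J (sym_part (endA D J u) v))
  - ((2%:R)^-1 : R)%:A *: J (covJ D J u v).

End Courant.

(* Main.v *)
Require Import Defs.
From HB Require Import structures.
From mathcomp Require Import all_boot all_order all_algebra.
From mathcomp Require Import ring.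
From Stdlib Require Import ClassicalEpsilon.
Import Order.TTheory GRing.Theory Num.Theory.
Local Open Scope ring_scope.

Section Aux.
Variables (R : realFieldType) (A : comAlgType R) (S : lmodType A).
Variable (E : @courant_algebroid R A S).
Variables (J : S -> S) (D : S -> S -> S).
Hypotheses (HJ : gen_almost_complex E J) (HD : gen_connection E D)
  (HT : torsion_free E D).

Local Notation ip := (ca_ip E).
Local Notation br := (ca_br E).
Local Notation pi := (ca_anchor E).
Local Notation e := (((8%:R)^-1 : R)%:A : A).

Lemma alg_mul (a b : R) : a%:A * b%:A = (a * b)%:A :> A.
Proof. by rewrite -scalerAl mul1r scalerA. Qed.

Lemma alg_nat (n : nat) (a : R) : (n%:R * a)%:A = n%:R * a%:A :> A.
Proof. by rewrite -scalerA scaler_nat mulr_natl. Qed.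

Lemma c4c2 : ((4%:R)^-1 : R)%:A * ((2%:R)^-1 : R)%:A = e.
Proof. rewrite alg_mul; congr (_ *: 1). by field. Qed.

Lemma c2e : ((2%:R)^-1 : R)%:A = 4%:R * e.
Proof. rewrite -alg_nat; congr (_ *: 1); by field. Qed.

Lemma c4e : ((4%:R)^-1 : R)%:A = 2%:R * e.
Proof. rewrite -alg_nat; congr (_ *: 1); by field. Qed.

Lemma h8 : 8%:R * e = 1.
Proof. by rewrite -alg_nat mulfV ?scale1r // pnatr_eq0. Qed.

Lemma ipDr x y z : ip x (y + z) = ip x y + ip x z.
Proof. by rewrite !(ca_ip_sym E x) ca_ip_addl. Qed.

Lemma ipZr (f : A) x y : ip x (f *: y) = f * ip x y.
Proof. by rewrite !(ca_ip_sym E x) ca_ip_scalel. Qed.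

Lemma ipNl x y : ip (- x) y = - ip x y.
Proof. by rewrite -scaleN1r ca_ip_scalel mulN1r. Qed.

Lemma ipNr x y : ip x (- y) = - ip x y.
Proof. by rewrite -scaleN1r ipZr mulN1r. Qed.

Lemma ipBl x y z : ip (x - y) z = ip x z - ip y z.
Proof. by rewrite ca_ip_addl ipNl. Qed.

Lemma ip0l x : ip 0 x = 0.
Proof. by rewrite -(scale0r (0 : S)) ca_ip_scalel mul0r. Qed.

Lemma ip_inj x y : (forall w, ip x w = ip y w) -> x = y.
Proof.
move=> h; apply: subr0_eq; apply: (@ca_ip_nondeg0 _ _ _ E) => w.
by rewrite ipBl h subrr.
Qed.

Lemma adjointP (F : S -> S) :
  (forall x y, F (x + y) = F x + F y) -> (forall (f : A) x, F (f *: x) = f *: F x) ->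
  forall v x, ip (adjoint E F v) x = ip v (F x).
Proof.
move=> HF1 HF2 v.
rewrite /adjoint.
apply: (epsilon_spec (inhabits 0) (fun s => forall x, ip s x = ip v (F x))).
have [s Hs] := @ca_ip_nondeg _ _ _ E (fun x => ip v (F x))
  (fun x y => ltac:(by rewrite /= HF1 ipDr)) (fun f x => ltac:(by rewrite /= HF2 ipZr)).
by exists s => x; rewrite Hs.
Qed.

Lemma piD a x y : pi a (x + y) = pi a x + pi a y.
Proof. by case: (ca_anchor_deriv E a). Qed.

Lemma pi0 a : pi a 0 = 0.
Proof. have [_ hs _] := ca_anchor_deriv E a. by have := hs 0 0; rewrite !scale0r. Qed.

Lemma piN a x : pi a (- x) = - pi a x.
Proof. have [_ hs _] := ca_anchor_deriv E a. by have := hs (-1) x; rewrite !scaleN1r. Qed.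

Lemma JD x y : J (x + y) = J x + J y.
Proof. by case: HJ. Qed.
Lemma JZ (f : A) x : J (f *: x) = f *: J x.
Proof. by case: HJ. Qed.
Lemma Jip x y : ip (J x) (J y) = ip x y.
Proof. by case: HJ. Qed.
Lemma JJ x : J (J x) = - x.
Proof. by case: HJ. Qed.
Lemma JN x : J (- x) = - J x.
Proof. by rewrite -scaleN1r JZ scaleN1r. Qed.
Lemma ipJl x y : ip (J x) y = - ip x (J y).
Proof. by rewrite -[in LHS]Jip JJ ipNl. Qed.

Lemma DaddL u1 u2 v : D (u1 + u2) v = D u1 v + D u2 v.
Proof. by case: HD. Qed.
Lemma DscL (f : A) u v : D (f *: u) v = f *: D u v.
Proof. by case: HD. Qed.
Lemma DaddR u v1 v2 : D u (v1 + v2) = D u v1 + D u v2.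
Proof. by case: HD. Qed.
Lemma DLeib u (f : A) v : D u (f *: v) = pi u f *: v + f *: D u v.
Proof. by case: HD. Qed.
Lemma Dmet u v w : pi u (ip v w) = ip (D u v) w + ip v (D u w).
Proof. by case: HD. Qed.

Lemma D0r a : D a 0 = 0.
Proof. have h := DaddR a 0 0. rewrite addr0 in h. by apply: (addrI (D a 0)); rewrite -h addr0. Qed.
Lemma DNr a b : D a (- b) = - D a b.
Proof.
apply/eqP; rewrite -addr_eq0 -DaddR addrC subrr; apply/eqP; exact: D0r.
Qed.

Definition G u v w := ip (D u v) w.
Definition Q u v w := ip (covJ D J u v) w.

Lemma GD1 a1 a2 b c : G (a1 + a2) b c = G a1 b c + G a2 b c.
Proof. by rewrite /G DaddL ca_ip_addl. Qed.
Lemma GZ1 (f : A) a b c : G (f *: a) b c = f * G a b c.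
Proof. by rewrite /G DscL ca_ip_scalel. Qed.
Lemma GD2 a b1 b2 c : G a (b1 + b2) c = G a b1 c + G a b2 c.
Proof. by rewrite /G DaddR ca_ip_addl. Qed.
Lemma GN2 a b c : G a (- b) c = - G a b c.
Proof. by rewrite /G DNr ipNl. Qed.
Lemma GZ2 (f : A) a b c : G a (f *: b) c = pi a f * ip b c + f * G a b c.
Proof. by rewrite /G DLeib ca_ip_addl !ca_ip_scalel. Qed.
Lemma GD3 a b c1 c2 : G a b (c1 + c2) = G a b c1 + G a b c2.
Proof. by rewrite /G ipDr. Qed.
Lemma GN3 a b c : G a b (- c) = - G a b c.
Proof. by rewrite /G ipNr. Qed.
Lemma GZ3 (f : A) a b c : G a b (f *: c) = f * G a b c.
Proof. by rewrite /G ipZr. Qed.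
Lemma Gmet a b c : pi a (ip b c) = G a b c + G a c b.
Proof. by rewrite Dmet /G (ca_ip_sym E b (D a c)). Qed.

Lemma QG a b c : Q a b c = G a (J b) c + G a b (J c).
Proof. by rewrite /Q /covJ ipBl ipJl opprK. Qed.

Lemma QD1 a1 a2 b c : Q (a1 + a2) b c = Q a1 b c + Q a2 b c.
Proof. rewrite !QG !GD1; ring. Qed.
Lemma QZ1 (f : A) a b c : Q (f *: a) b c = f * Q a b c.
Proof. rewrite !QG !GZ1; ring. Qed.
Lemma QN1 a b c : Q (- a) b c = - Q a b c.
Proof. by rewrite -scaleN1r QZ1 mulN1r. Qed.
Lemma QD2 a b1 b2 c : Q a (b1 + b2) c = Q a b1 c + Q a b2 c.
Proof. rewrite !QG JD !GD2; ring. Qed.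
Lemma QZ2 (f : A) a b c : Q a (f *: b) c = f * Q a b c.
Proof. rewrite !QG JZ !GZ2 ipJl; ring. Qed.
Lemma QN2 a b c : Q a (- b) c = - Q a b c.
Proof. by rewrite -scaleN1r QZ2 mulN1r. Qed.
Lemma QD3 a b c1 c2 : Q a b (c1 + c2) = Q a b c1 + Q a b c2.
Proof. by rewrite /Q ipDr. Qed.
Lemma QZ3 (f : A) a b c : Q a b (f *: c) = f * Q a b c.
Proof. by rewrite /Q ipZr. Qed.
Lemma QN3 a b c : Q a b (- c) = - Q a b c.
Proof. by rewrite /Q ipNr. Qed.

Lemma Qskew a b c : Q a b c = - Q a c b.
Proof.
apply/eqP; rewrite -addr_eq0 !QG; apply/eqP.
have hh : pi a (ip (J b) c) + pi a (ip b (J c)) = 0 by rewrite -piD ipJl addNr pi0.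
rewrite Gmet Gmet in hh. rewrite -hh; ring.
Qed.

Lemma QJJ a b c : Q a (J b) (J c) = - Q a b c.
Proof. rewrite !QG !JJ GN2 GN3; ring. Qed.

Lemma QJ a b c : Q a b (J c) = - Q a c (J b).
Proof.
have h := QJJ a b (J c). rewrite JJ QN3 in h.
have h2 : Q a b (J c) = Q a (J b) c by apply: oppr_inj; rewrite h.
by rewrite h2 Qskew.
Qed.

Lemma brG u v w : ip (br u v) w = G u v w - G v u w + G w u v.
Proof.
have h := congr1 (fun s => ip s w) (HT u v).
rewrite /torsion /= ca_ip_addl !ipBl ip0l in h.
rewrite (@adjointP (fun x => D x u)) in h; last first.
  by move=> f x; rewrite DscL. by move=> x y; rewrite DaddL.
rewrite (ca_ip_sym E v) in h.
rewrite /G; transitivity (ip (br u v) w + (ip (D u v) w - ip (D v u) w - ip (br u v) w + ip (D w u) v)); first by rewrite h addr0.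
ring. Qed.

Lemma endA_add u x y : endA D J u (x + y) = endA D J u x + endA D J u y.
Proof. by rewrite /endA /covJ !DaddL JD opprD addrACA. Qed.
Lemma endA_scale u (f : A) x : endA D J u (f *: x) = f *: endA D J u x.
Proof. by rewrite /endA /covJ !DscL JZ scalerBr. Qed.

Lemma ip_adjA u x w : ip (adjoint E (endA D J u) x) w = Q w u x.
Proof.
rewrite adjointP; last by move=> f y; rewrite endA_scale.
  by rewrite ca_ip_sym.
by move=> y z; rewrite endA_add.
Qed.

Lemma ip_symsum u x w :
  ip (endA D J u x + adjoint E (endA D J u) x) w = Q x u w + Q w u x.
Proof. by rewrite ca_ip_addl ip_adjA. Qed.

Lemma ipendA u x w : ip (endA D J u x) w = Q x u w.
Proof. by []. Qed.
Lemma ipcov a b c : ip (covJ D J a b) c = Q a b c.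
Proof. by []. Qed.

Lemma ip_tildeD u v w : ip (tildeD E D J u v) w =
  G u v w - e * (Q (J v) u w + Q w u (J v) - Q v u (J w) - Q (J w) u v)
  + 4%:R * e * Q u v (J w).
Proof.
rewrite /tildeD /sym_part JZ -scalerDr scalerA c4c2.
rewrite !ipBl !ca_ip_scalel (ca_ip_addl E _ (J _)) !ipJl !ip_symsum ipcov c2e.
rewrite /G; ring.
Qed.

Local Notation tD := (tildeD E D J).

Lemma ip4 a b c d w : ip (a - b - c + d) w = ip a w - ip b w - ip c w + ip d w.
Proof. by rewrite ca_ip_addl !ipBl. Qed.

Lemma tD_addL u1 u2 v : tD (u1 + u2) v = tD u1 v + tD u2 v.
Proof. apply: ip_inj => w; rewrite ca_ip_addl !ip_tildeD !QD2 QD1 GD1; ring. Qed.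

Lemma tD_scL (f : A) u v : tD (f *: u) v = f *: tD u v.
Proof. apply: ip_inj => w; rewrite ca_ip_scalel !ip_tildeD !QZ2 QZ1 GZ1; ring. Qed.

Lemma tD_addR u v1 v2 : tD u (v1 + v2) = tD u v1 + tD u v2.
Proof. apply: ip_inj => w; rewrite ca_ip_addl !ip_tildeD JD !QD1 !QD3 QD2 GD2; ring. Qed.

Lemma tD_Leib u (f : A) v : tD u (f *: v) = pi u f *: v + f *: tD u v.
Proof.
apply: ip_inj => w; rewrite ip_tildeD ca_ip_addl !ca_ip_scalel ip_tildeD JZ !QZ1 !QZ3 QZ2 GZ2; ring.
Qed.

Lemma tD_met u v w : pi u (ip v w) = ip (tD u v) w + ip v (tD u w).
Proof. rewrite (ca_ip_sym E v (tD u w)) !ip_tildeD Gmet (QJ u w v); ring. Qed.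

Lemma tD_covJ u v : covJ tD J u v = 0.
Proof.
apply: ip_inj => w; rewrite ip0l /covJ ipBl ipJl opprK !ip_tildeD QJJ !JJ !QN1 !QN3.
rewrite (_ : G u (J v) w = Q u v w - G u v (J w)); last by rewrite QG addrK.
transitivity ((1 - 8%:R * e) * Q u v w); first ring.
by rewrite h8 subrr mul0r.
Qed.

Lemma NQ u v w : nijenhuis3 E J u v w =
  Q (J u) v w - Q (J v) u w + Q w u (J v) + Q u v (J w) - Q v u (J w) + Q (J w) u v.
Proof.
rewrite /nijenhuis3 /nijenhuis !ipBl ipJl ca_ip_addl !brG !QG !JJ ?GN2 ?GN3; ring.
Qed.

Lemma tD_tors u v w : torsion3 E tD u v w = ((4%:R)^-1 : R)%:A * nijenhuis3 E J u v w.
Proof.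
rewrite /torsion3 /torsion ip4 (@adjointP (fun x => tD x u)); last first.
  by move=> f x; rewrite tD_scL. by move=> x y; rewrite tD_addL.
rewrite (ca_ip_sym E v (tD w u)) !ip_tildeD brG NQ c4e.
rewrite (QJ w v u) (QJ v w u) (QJ u w v) (Qskew (J w) v u) (Qskew (J u) w v) (Qskew (J v) w u).
ring.
Qed.

End Aux.

Theorem proposition3p6 (R : realFieldType) (A : comAlgType R) (S : lmodType A)
  (E : @courant_algebroid R A S) (J : S -> S) (D : S -> S -> S) :
  gen_almost_complex E J -> gen_connection E D -> torsion_free E D ->
  [/\ gen_connection E (tildeD E D J),
      (forall u v, covJ (tildeD E D J) J u v = 0),
      (forall u v w, torsion3 E (tildeD E D J) u v w
                     = ((4%:R)^-1 : R)%:A * nijenhuis3 E J u v w) &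
      (integrable E J -> torsion_free E (tildeD E D J))].
Proof.
move=> HJ HD HT; split.
- split; [exact: tD_addL | exact: tD_scL | exact: tD_addR | exact: tD_Leib | exact: tD_met].
- exact: tD_covJ.
- exact: tD_tors.
- move=> Hint u v; apply: (@ip_inj _ _ _ E) => w.
  have := @tD_tors _ _ _ E J D HJ HD HT u v w; rewrite /torsion3 /nijenhuis3 => ->.
  by rewrite Hint !ip0l mulr0.
Qed.
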